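(* Let $n\ge 3$ and let $BW_n$ be the gear graph on $2n+1$ vertices. Then $\varphi(BW_n^2)=\frac{1}{2}[(n+1)^2+5]$ if $n$ is even and $\frac{1}{2}(n+1)^2$ if $n$ is odd; $\varphi(BW_n^3)=n(n+1)$ if $n$ is even and $\frac{1}{2}(2n^2+3n+3)$ if $n$ is odd; $\varphi(BW_n^4)=n(2n-1)$.
   Context: All graphs are finite, simple and without isolated vertices. $\mathbb{N}_0$ denotes the set of non-negative integers; for finite $A,B\subseteq\mathbb{N}_0$, $A+B=\{a+b: a\in A, b\in B\}$. An integer additive set-indexer (IASI) of a graph $G$ is an injective map $f$ from $V(G)$ to the finite non-empty subsets of $\mathbb{N}_0$ such that the induced edge map $f^+(uv)=f(u)+f(v)$ is injective on $E(G)$. A weak IASI (WIASI) is an IASI $f$ with $|f^+(uv)|=\max(|f(u)|,|f(v)|)$ for every edge $uv$ (equivalently, for every edge at least one end vertex has a singleton label). A vertex or edge is mono-indexed if its set-label has cardinality $1$. Every graph admits a WIASI. The sparing number $\varphi(G)$ is the minimum, over all WIASIs of $G$, of the number of mono-indexed edges of $G$. The $r$-th power $G^r$ has vertex set $V(G)$, two distinct vertices being adjacent iff their distance in $G$ is at most $r$. The gear graph (bipartite wheel) $BW_n$ is obtained from the wheel $C_n+K_1$ (hub $u$, rim cycle $v_1v_2\cdots v_nv_1$) by inserting a new vertex $w_i$ on each rim edge $v_iv_{i+1}$ (indices mod $n$); thus $u$ is adjacent to each $v_i$, and $w_i$ is adjacent exactly to $v_i$ and $v_{i+1}$. *)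

(* Defs.v *)
From mathcomp Require Import all_boot.
Set Implicit Arguments. Unset Strict Implicit. Unset Printing Implicit Defensive.

(* Finite subsets of N0 are represented
   by sequences of naturals, compared as sets (=i); their cardinality is
   the number of distinct entries. *)

Definition scard (A : seq nat) : nat := size (undup A).

Definition sumset (A B : seq nat) : seq nat := [seq a + b | a <- A, b <- B].

Definition is_IASI (T : finType) (adj : rel T) (f : T -> seq nat) : Prop :=
  [/\ (forall x, f x != [::]),
      (forall x y, f x =i f y -> x = y) &
      (forall u v x y, adj u v -> adj x y ->
         sumset (f u) (f v) =i sumset (f x) (f y) ->
         (u = x /\ v = y) \/ (u = y /\ v = x))].

Definition is_WIASI (T : finType) (adj : rel T) (f : T -> seq nat) : Prop :=
  is_IASI adj f /\
  (forall u v, adj u v ->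
     scard (sumset (f u) (f v)) = maxn (scard (f u)) (scard (f v))).

(* number of (unordered) mono-indexed edges: ordered adjacent pairs with
   singleton edge label, halved (adj is symmetric). *)
Definition mono_edges (T : finType) (adj : rel T) (f : T -> seq nat) : nat :=
  (#|[set p : T * T | adj p.1 p.2 && (scard (sumset (f p.1) (f p.2)) == 1)]|)./2.

Definition sparing_number_is (T : finType) (adj : rel T) (k : nat) : Prop :=
  (exists f, is_WIASI adj f /\ mono_edges adj f = k) /\
  (forall f, is_WIASI adj f -> k <= mono_edges adj f).

Fixpoint dist_le (T : finType) (adj : rel T) (r : nat) (x y : T) : bool :=
  match r with
  | 0 => x == y
  | r'.+1 => dist_le adj r' x y || [exists z, adj x z && dist_le adj r' z y]
  end.

Definition graph_pow (T : finType) (adj : rel T) (r : nat) : rel T :=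
  fun x y => (x != y) && dist_le adj r x y.

(* Gear graph BW_n: None = hub u, Some (inl i) = v_i, Some (inr i) = w_i
   (indices 0..n-1, mod n); w_i adjacent to v_i and v_{i+1}. *)
Definition gear_vertex (n : nat) : finType := option ('I_n + 'I_n)%type.

Definition gear_adj (n : nat) : rel (gear_vertex n) :=
  fun x y =>
    match x, y with
    | None, Some (inl _) => true
    | Some (inl _), None => true
    | Some (inl i), Some (inr j) => (val i == val j) || (val i == (val j).+1 %% n)
    | Some (inr j), Some (inl i) => (val i == val j) || (val i == (val j).+1 %% n)
    | _, _ => false
    end.

(* Main.v *)
Require Import Defs.
From mathcomp Require Import all_boot.
From mathcomp Require Import zify.

Definition k2 n := if odd n then ((n + 1) ^ 2)./2 else ((n + 1) ^ 2 + 5)./2.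
Definition k3 n := if odd n then (2 * n ^ 2 + 3 * n + 3)./2 else n * (n + 1).

Lemma k2E n : 2 * k2 n = if odd n then (n + 1) ^ 2 else (n + 1) ^ 2 + 5.
Proof.
rewrite /k2; have := odd_double_half n; case: (odd n) => /= E.
- have -> : (n + 1) ^ 2 = ((n./2).+1 ^ 2 * 2).*2 by rewrite -{1}E; rewrite -!muln2; nia.
  by rewrite doubleK -muln2; lia.
- have -> : (n + 1) ^ 2 + 5 = ((n./2) ^ 2 * 2 + n./2 * 2 + 3).*2 by rewrite -{1}E; rewrite -!muln2; nia.
  by rewrite doubleK -muln2; lia.
Qed.

Lemma k3E n : 2 * k3 n = if odd n then 2 * n ^ 2 + 3 * n + 3 else 2 * (n * (n + 1)).
Proof.
rewrite /k3; have := odd_double_half n; case: (odd n) => //= E.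
have -> : 2 * n ^ 2 + 3 * n + 3 = (n ^ 2 + 3 * n./2 + 3).*2 by rewrite -{2}E; rewrite -!muln2; nia.
by rewrite doubleK -muln2; lia.
Qed.

Lemma ar2a n : 2 < n -> 2 * (n + n) + 2 * k2 n <= (n + n) + n * n.+2 + n * 5.
Proof.
move=> hn; rewrite k2E; have := odd_double_half n.
case: (odd n) => /= E; nia.
Qed.

Lemma ar2b n a b : 2 < n -> a <= 1 -> b + b + a <= n ->
  2 * (a * n.+2 + b * 5) + 2 * k2 n <= (n + n) + n * n.+2 + n * 5.
Proof.
move=> hn ha hb; rewrite k2E; have := odd_double_half n.
case: a ha hb => [|[|//]] _ hb; case: (odd n) => /= E; nia.
Qed.

Lemma ar3a n : 2 < n -> 2 * (n + n) + 2 * k3 n <= (n + n) + n * (n + n) + n * (n + 3).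
Proof.
move=> hn; rewrite k3E; have := odd_double_half n.
case: (odd n) => /= E; nia.
Qed.

Lemma ar3b n b : 2 < n -> b + b <= n ->
  2 * (b * (n + 3)) + 2 * k3 n <= (n + n) + n * (n + n) + n * (n + 3).
Proof.
move=> hn hb; rewrite k3E; have := odd_double_half n.
case: (odd n) => /= E.
- have : b + b <= n.-1 by lia.
  move/(leq_mul (leqnn (n + 3))); nia.
- move: hb => /(leq_mul (leqnn (n + 3))); nia.
Qed.

Lemma ar2w n : 2 < n -> 2 * k2 n + 2 * (1 * n.+2 + (n.-1)./2 * 5) = (n + n) + n * n.+2 + n * 5.
Proof.
move=> hn; rewrite k2E.
have Hp : odd n.-1 = ~~ odd n by rewrite -{2}(prednK (ltnW (ltnW hn))) oddS negbK.
have := odd_double_half n.-1; rewrite Hp; case: (odd n) => /= E; rewrite -muln2 in E.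
- have -> : (n + 1) ^ 2 = n * n + 2 * n + 1 by rewrite !expnS expn0; lia.
  lia.
- have -> : (n + 1) ^ 2 = n * n + 2 * n + 1 by rewrite !expnS expn0; lia.
  lia.
Qed.

Lemma ar3w n : 2 < n -> 2 * k3 n + 2 * (n./2 * (n + 3)) = (n + n) + n * (n + n) + n * (n + 3).
Proof.
move=> hn; rewrite k3E; have := odd_double_half n.
case: (odd n) => /= E; nia.
Qed.

Lemma ar4w n : 2 < n -> 2 * (n * (2 * n - 1)) + 2 * (1 * (n + n)) = (n + n).+1 * (n + n).
Proof. move=> hn; nia. Qed.

Lemma cnt_par m : \sum_(j < m) (odd j : nat) = m./2 /\ \sum_(j < m) (~~ odd j : nat) = uphalf m.
Proof.
elim: m => [|m [IH1 IH2]]; first by rewrite !big_ord0.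
rewrite !big_ord_recr /= IH1 IH2 uphalf_half /=.
by case: (odd m) => /=; rewrite ?addn0 ?addn1 //= uphalf_half.
Qed.
Set Implicit Arguments. Unset Strict Implicit. Unset Printing Implicit Defensive.

Lemma scard_eq (s1 s2 : seq nat) : s1 =i s2 -> scard s1 = scard s2.
Proof.
move=> H; apply/eqP; rewrite eqn_leq /scard.
rewrite !uniq_leq_size ?undup_uniq // => x; rewrite !mem_undup H //.
Qed.

Lemma sumsetC A B : sumset A B =i sumset B A.
Proof.
move=> x; apply/allpairsP/allpairsP => [[[a b] /= [Ha Hb ->]]|[[a b] /= [Ha Hb ->]]];
  by exists (b, a); rewrite addnC.
Qed.

Lemma seq_max (A : seq nat) : A != [::] -> exists2 m, m \in A & forall a, a \in A -> a <= m.
Proof.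
elim: A => // a A IH _.
case: (altP (A =P [::])) => [->|HA].
  by exists a; rewrite ?mem_seq1 // => x; rewrite mem_seq1 => /eqP ->.
have [m Hm Hmax] := IH HA.
exists (maxn a m).
  by rewrite /maxn; case: ifP => _; rewrite inE ?Hm ?orbT ?eqxx.
move=> x; rewrite inE => /orP [/eqP ->|Hx]; first exact: leq_maxl.
by apply: leq_trans (Hmax _ Hx) (leq_maxr _ _).
Qed.

Lemma sumset_gt A B b1 b2 : A != [::] -> b1 \in B -> b2 \in B -> b1 < b2 ->
  scard A < scard (sumset A B).
Proof.
move=> HA H1 H2 H12; have [m Hm Hmax] := seq_max HA.
rewrite /scard.
have -> : size (undup A) = size (map (addn^~ b1) (undup A)) by rewrite size_map.
rewrite -ltnS -/(size ((m + b2) :: _)) ltnS.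
apply: uniq_leq_size.
  rewrite /= (map_inj_uniq (@addIn b1)) undup_uniq andbT.
  apply/mapP => [[a]]; rewrite mem_undup => Ha Heq.
  have := Hmax _ Ha; lia.
move=> x; rewrite inE mem_undup => /orP [/eqP ->|/mapP [a]].
  exact: allpairs_f.
by rewrite mem_undup => Ha ->; apply: allpairs_f.
Qed.

Lemma scard_two (B : seq nat) : 1 < scard B -> exists b1 b2, [/\ b1 \in B, b2 \in B & b1 < b2].
Proof.
rewrite /scard => H.
set b := nth 0 (undup B) 0; set c := nth 0 (undup B) 1.
have hb : b \in B by rewrite -mem_undup mem_nth //; lia.
have hc : c \in B by rewrite -mem_undup mem_nth.
have hbc : b != c by rewrite /b /c nth_uniq ?undup_uniq //; lia.
case: (ltngtP b c) => h.
- by exists b, c.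
- by exists c, b.
- by rewrite h eqxx in hbc.
Qed.

Lemma scard_pos (A : seq nat) : A != [::] -> 0 < scard A.
Proof.
case: A => // a A _; rewrite /scard.
have : a \in undup (a :: A) by rewrite mem_undup inE eqxx.
by case: (undup _).
Qed.

Lemma wiasi_indep (T : finType) (adj : rel T) f u v : is_WIASI adj f -> adj u v ->
  (scard (f u) == 1) || (scard (f v) == 1).
Proof.
move=> [[Hne _ _] Hw] Huv; have := Hw _ _ Huv.
have pu := scard_pos (Hne u); have pv := scard_pos (Hne v).
case: eqP => hu /=; first by [].
case: eqP => hv //= Heq.
have [b1 [b2 [h1 h2 h12]]] := @scard_two (f v) ltac:(lia).
have [a1 [a2 [g1 g2 g12]]] := @scard_two (f u) ltac:(lia).
have X1 := sumset_gt (Hne u) h1 h2 h12.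
have X2 := sumset_gt (Hne v) g1 g2 g12.
rewrite (scard_eq (sumsetC (f v) (f u))) in X2.
lia.
Qed.

Lemma wiasi_mono (T : finType) (adj : rel T) f u v : is_WIASI adj f -> adj u v ->
  (scard (sumset (f u) (f v)) == 1) = (scard (f u) == 1) && (scard (f v) == 1).
Proof.
move=> [[Hne A1 A2] Hw] Huv; rewrite Hw //.
have pu := scard_pos (Hne u); have pv := scard_pos (Hne v).
apply/idP/idP; lia.
Qed.

Lemma sidon0 i j k l : i < j -> k < l -> 2 ^ i + 2 ^ j = 2 ^ k + 2 ^ l -> i = k /\ j = l.
Proof.
move=> hij hkl E.
have Hj : j = l.
  case: (ltngtP j l) => // h.
  - have : 2 ^ i + 2 ^ j < 2 ^ l.
      have : 2 ^ i < 2 ^ j by rewrite ltn_exp2l.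
      have : 2 ^ j.+1 <= 2 ^ l by rewrite leq_exp2l.
      rewrite expnS; lia.
    lia.
  - have : 2 ^ k + 2 ^ l < 2 ^ j.
      have : 2 ^ k < 2 ^ l by rewrite ltn_exp2l.
      have : 2 ^ l.+1 <= 2 ^ j by rewrite leq_exp2l.
      rewrite expnS; lia.
    lia.
split=> //; subst l.
have : 2 ^ i = 2 ^ k by lia.
by move/eqP; rewrite eqn_exp2l // => /eqP.
Qed.

Lemma sidon i j k l : i != j -> k != l -> 2 ^ i + 2 ^ j = 2 ^ k + 2 ^ l ->
  (i = k /\ j = l) \/ (i = l /\ j = k).
Proof.
move=> hij hkl E.
case: (ltngtP i j) hij => // h1 _; case: (ltngtP k l) hkl => // h2 _.
- by left; apply: sidon0 E.
- by right; case: (sidon0 h1 h2 (etrans E (addnC _ _))) => -> ->.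
- by right; case: (sidon0 h1 h2 (etrans (addnC _ _) E)) => -> ->.
- by left; case: (sidon0 h1 h2 (etrans (addnC _ _) (etrans E (addnC _ _)))) => -> ->.
Qed.

Definition lab (T : finType) (I : {set T}) (x : T) : seq nat :=
  if x \in I then [:: 2 ^ enum_rank x; 2 ^ enum_rank x + 2 ^ #|T|.+1]
  else [:: 2 ^ enum_rank x].

Lemma lab_small (T : finType) (x : T) : 2 ^ enum_rank x < 2 ^ #|T|.
Proof. by rewrite ltn_exp2l. Qed.

Lemma lab_mem (T : finType) (I : {set T}) x z : z \in lab I x ->
  z = 2 ^ enum_rank x \/ z = 2 ^ enum_rank x + 2 ^ #|T|.+1.
Proof. by rewrite /lab; case: (x \in I); rewrite !inE; [case/orP => /eqP|move/eqP]; auto. Qed.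

Lemma lab_head (T : finType) (I : {set T}) x : 2 ^ enum_rank x \in lab I x.
Proof. by rewrite /lab; case: (x \in I); rewrite !inE eqxx. Qed.

Lemma lab_scard (T : finType) (I : {set T}) x : scard (lab I x) = if x \in I then 2 else 1.
Proof.
rewrite /lab /scard; case: (x \in I) => //=.
rewrite inE; case: eqP => //=; rewrite expnS; lia.
Qed.

Lemma construct (T : finType) (adj : rel T) (I : {set T}) :
  irreflexive adj -> (forall x y, adj x y -> x \in I -> y \in I -> False) ->
  is_WIASI adj (lab I) /\ (forall x, (scard (lab I x) == 1) = (x \notin I)).
Proof.
move=> Hirr Hind.
have K0 : forall x : T, 2 ^ enum_rank x < 2 ^ #|T|.+1.
  by move=> x; apply: leq_trans (lab_small x) _; rewrite leq_exp2l.
have Hsum : forall u v : T, 2 ^ enum_rank u + 2 ^ enum_rank v < 2 ^ #|T|.+1.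
  by move=> u v; have := lab_small u; have := lab_small v; rewrite expnS; lia.
split; last by move=> x; rewrite lab_scard; case: (x \in I).
split; first split.
- by move=> x; rewrite /lab; case: (x \in I).
- move=> x y H; have := lab_head I x; rewrite H => /lab_mem [].
    by move/eqP; rewrite eqn_exp2l // => /eqP /ord_inj /enum_rank_inj.
  by have := K0 x; lia.
- move=> u v x y Huv Hxy E.
  have : 2 ^ enum_rank u + 2 ^ enum_rank v \in sumset (lab I x) (lab I y).
    by rewrite -E; apply: allpairs_f; apply: lab_head.
  case/allpairsP => [[a b] /= [Ha Hb Eab]].
  have Eq : 2 ^ enum_rank u + 2 ^ enum_rank v = 2 ^ enum_rank x + 2 ^ enum_rank y.
    have := Hsum u v; have := Hsum x y.
    move: Eab; case: (lab_mem Ha) => ->; case: (lab_mem Hb) => ->;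
    move: (2 ^ #|T|.+1) (2 ^ enum_rank u) (2 ^ enum_rank v) (2 ^ enum_rank x) (2 ^ enum_rank y); lia.
  have nuv : enum_rank u != enum_rank v :> nat.
    by apply/eqP => /ord_inj /enum_rank_inj E'; rewrite E' Hirr in Huv.
  have nxy : enum_rank x != enum_rank y :> nat.
    by apply/eqP => /ord_inj /enum_rank_inj E'; rewrite E' Hirr in Hxy.
  case: (sidon nuv nxy Eq) => [[/ord_inj/enum_rank_inj -> /ord_inj/enum_rank_inj ->]|
                               [/ord_inj/enum_rank_inj -> /ord_inj/enum_rank_inj ->]]; auto.
- move=> u v Huv; rewrite !lab_scard.
  rewrite /lab; case Hu: (u \in I); case Hv: (v \in I) => //=.
  + by case: (Hind _ _ Huv Hu Hv).
  + rewrite /scard /= !inE; case: eqP => //; rewrite expnS; lia.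
  + rewrite /scard /= !inE; case: eqP => //; rewrite expnS; lia.
Qed.

Definition MSs (T : finType) (adj : rel T) (I : {set T}) : nat :=
  \sum_x \sum_y [&& adj x y, x \notin I & y \notin I].
Definition degr (T : finType) (adj : rel T) (x : T) : nat := \sum_y (adj x y : nat).
Definition Wt (T : finType) (adj : rel T) (I : {set T}) : nat := \sum_x (x \in I) * degr adj x.
Definition Dt (T : finType) (adj : rel T) : nat := \sum_x degr adj x.
Definition indep (T : finType) (adj : rel T) (I : {set T}) :=
  forall x y, adj x y -> x \in I -> y \in I -> False.

Lemma card_pairs (T : finType) (Q : T -> T -> bool) :
  #|[set p : T * T | Q p.1 p.2]| = \sum_x \sum_y (Q x y : nat).
Proof.
rewrite -sum1_card big_mkcond /= pair_big /=.
by apply: eq_bigr => [[x y]] _; rewrite inE /=; case: (Q x y).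
Qed.

Lemma mono_eq (T : finType) (adj : rel T) f : is_WIASI adj f ->
  mono_edges adj f = (MSs adj [set x | scard (f x) != 1])./2.
Proof.
move=> Hw; rewrite /mono_edges /MSs.
have -> : [set p : T * T | adj p.1 p.2 && (scard (sumset (f p.1) (f p.2)) == 1)] =
          [set p : T * T | [&& adj p.1 p.2, p.1 \notin [set x | scard (f x) != 1]
                               & p.2 \notin [set x | scard (f x) != 1]]].
  apply/setP => [[x y]]; rewrite !inE /= !negbK.
  by case H: (adj x y) => //=; rewrite (wiasi_mono Hw H).
by rewrite (card_pairs (fun x y => [&& adj x y, x \notin [set x | scard (f x) != 1]
                               & y \notin [set x | scard (f x) != 1]])).
Qed.

Lemma count_id (T : finType) (adj : rel T) I : symmetric adj -> indep adj I ->
  Dt adj = MSs adj I + 2 * Wt adj I.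
Proof.
move=> Hs Hi; rewrite /Dt /MSs /Wt /degr.
have E : forall x y, (adj x y : nat) =
   [&& adj x y, x \notin I & y \notin I] + (x \in I) * adj x y + (y \in I) * adj x y.
  move=> x y; case H: (adj x y); case Hx: (x \in I); case Hy: (y \in I) => //.
  by case: (Hi _ _ H Hx Hy).
have -> : \sum_x \sum_y (adj x y : nat) = \sum_x (\sum_y ([&& adj x y, x \notin I & y \notin I] : nat)
   + \sum_y ((x \in I) * adj x y : nat) + \sum_y ((y \in I) * adj x y : nat)).
  by apply: eq_bigr => x _; rewrite -!big_split; apply: eq_bigr => y _; apply: E.
rewrite !big_split /=.
have -> : \sum_x \sum_y ((x \in I) * adj x y : nat) = \sum_x (x \in I) * \sum_y (adj x y : nat).
  by apply: eq_bigr => x _; rewrite big_distrr.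
have -> : \sum_x \sum_y ((y \in I) * adj x y : nat) = \sum_x (x \in I) * \sum_y (adj x y : nat).
  rewrite exchange_big /=; apply: eq_bigr => y _; rewrite big_distrr /=.
  by apply: eq_bigr => x _; rewrite Hs.
lia.
Qed.

Lemma sparing_char (T : finType) (adj : rel T) k :
  irreflexive adj -> symmetric adj ->
  (exists I, indep adj I /\ 2 * k + 2 * Wt adj I = Dt adj) ->
  (forall I, indep adj I -> 2 * Wt adj I + 2 * k <= Dt adj) ->
  sparing_number_is adj k.
Proof.
move=> Hirr Hs [I [HI EI]] Hlow; split.
  have [Hw Hsc] := construct Hirr HI.
  exists (lab I); split=> //; rewrite mono_eq //.
  have -> : [set x | scard (lab I x) != 1] = I.
    by apply/setP => x; rewrite inE Hsc negbK.
  have := count_id Hs HI; rewrite -EI => E.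
  have -> : MSs adj I = k.*2 by rewrite -muln2; lia.
  by rewrite doubleK.
move=> f Hw; rewrite mono_eq //.
set J := [set x | scard (f x) != 1].
have HJ : indep adj J.
  move=> x y H; rewrite !inE => hx hy.
  by have := wiasi_indep Hw H; rewrite (negbTE hx) (negbTE hy).
have := count_id Hs HJ; have := Hlow _ HJ => h1 h2.
have : k.*2 <= MSs adj J by rewrite -muln2; lia.
by move/half_leq; rewrite doubleK.
Qed.

Lemma big_gear n (F : gear_vertex n -> nat) :
  \sum_(x : gear_vertex n) F x = F None + \sum_(k < n) F (Some (inl k)) + \sum_(k < n) F (Some (inr k)).
Proof.
rewrite ![index_enum _]unlock [@Finite.enum in LHS]unlock /= big_cons big_map.
rewrite -addnA; congr (_ + _).
by rewrite -[\sum_(i <- Finite.enum _) _]/(\sum_(i : 'I_n + 'I_n) F (Some i)) big_sumType.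
Qed.

Lemma exists_gear n (P : pred (gear_vertex n)) :
  [exists z, P z] = [|| P None, [exists k, P (Some (inl k))] | [exists k, P (Some (inr k))]].
Proof.
apply/existsP/idP => [[[[k|k]|] H]|].
- by apply/or3P/Or32; apply/existsP; exists k.
- by apply/or3P/Or33; apply/existsP; exists k.
- by rewrite H.
case/or3P => [H|/existsP [k H]|/existsP [k H]]; by eexists; apply: H.
Qed.

Definition vw n (k j : 'I_n) : bool := (k == j) || (k == ordS j).
Definition sh n (i j : 'I_n) : bool := [exists k, vw k i && vw k j].

Lemma vw_gear n (k j : 'I_n) : gear_adj (Some (inl k)) (Some (inr j)) = vw k j.
Proof. by []. Qed.
Lemma vw_gear' n (k j : 'I_n) : gear_adj (Some (inr j)) (Some (inl k)) = vw k j.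
Proof. by []. Qed.

Lemma distS (T : finType) (adj : rel T) r x y :
  dist_le adj r.+1 x y = dist_le adj r x y || [exists z, adj x z && dist_le adj r z y].
Proof. by []. Qed.

Lemma dist1 (T : finType) (adj : rel T) x y : dist_le adj 1 x y = (x == y) || adj x y.
Proof.
rewrite distS /=; congr (_ || _).
by apply/existsP/idP => [[z /andP [h /eqP <-]]|h] //; exists y; rewrite h eqxx.
Qed.

Lemma ex_false (T : finType) : [exists x : T, false] = false.
Proof. by apply/existsP => [[]]. Qed.

Definition D2 n (x y : gear_vertex n) : bool :=
  match x, y with
  | Some (inl k), Some (inr j) => vw k j
  | Some (inr j), Some (inl k) => vw k j
  | Some (inr i), Some (inr j) => sh i j
  | _, _ => true
  end.

Lemma dist2 n (x y : gear_vertex n) : dist_le (@gear_adj n) 2 x y = D2 x y.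
Proof.
rewrite distS dist1; under eq_existsb => z do rewrite dist1.
rewrite exists_gear.
case: x => [[k|j]|]; case: y => [[k'|j']|] /=.
all: try (rewrite ?orbT ?orbF ?andbT ?andbF /=; done).
all: rewrite ?ex_false ?orbF /=.
- apply/idP/idP; last by move=> H; apply/orP; left.
  by case/orP => // /existsP [z /andP [H /orP [/eqP [<-]|//]]].
- apply/idP/idP; last by move=> H; apply/orP; left.
  by case/orP => // /existsP [z /andP [H /orP [/eqP [<-]|//]]].
- apply/idP/idP => [/orP [/eqP [<-]|//]|H]; last by apply/orP; right.
  by apply/existsP; exists j; rewrite /vw eqxx.
- by apply/existsP; exists j; rewrite eqxx.
- by apply/existsP; exists j'; rewrite eqxx.
Qed.

Definition D3 n (x y : gear_vertex n) : bool :=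
  match x, y with
  | Some (inr i), Some (inr j) => sh i j
  | _, _ => true
  end.

Lemma dist3 n (x y : gear_vertex n) : dist_le (@gear_adj n) 3 x y = D3 x y.
Proof.
rewrite distS dist2; under eq_existsb => z do rewrite dist2.
rewrite exists_gear.
case: x => [[k|j]|]; case: y => [[k'|j']|] /=.
all: try (rewrite ?orbT ?orbF ?andbT ?andbF /=; done).
all: rewrite ?ex_false ?orbF /=.
- by apply/orP; right; apply/existsP; exists j; rewrite eqxx.
- by apply/idP/idP => [/orP [//|//]|H]; apply/orP; left.
Qed.

Lemma dist4 n (x y : gear_vertex n) : dist_le (@gear_adj n) 4 x y = true.
Proof.
rewrite distS dist3; under eq_existsb => z do rewrite dist3.
rewrite exists_gear.
case: x => [[k|j]|]; case: y => [[k'|j']|] /=.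
all: try (rewrite ?orbT ?orbF ?andbT ?andbF /=; done).
all: rewrite ?ex_false ?orbF /=.
by apply/orP; right; apply/existsP; exists j; rewrite eqxx.
Qed.

Lemma gp2 n (x y : gear_vertex n) : graph_pow (@gear_adj n) 2 x y = (x != y) && D2 x y.
Proof. by rewrite /graph_pow dist2. Qed.
Lemma gp3 n (x y : gear_vertex n) : graph_pow (@gear_adj n) 3 x y = (x != y) && D3 x y.
Proof. by rewrite /graph_pow dist3. Qed.
Lemma gp4 n (x y : gear_vertex n) : graph_pow (@gear_adj n) 4 x y = (x != y).
Proof. by rewrite /graph_pow dist4 andbT. Qed.

Lemma sh_sym n (i j : 'I_n) : sh i j = sh j i.
Proof. by apply: eq_existsb => k; rewrite andbC. Qed.

Lemma gp_irr n r : irreflexive (graph_pow (@gear_adj n) r).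
Proof. by move=> x; rewrite /graph_pow eqxx. Qed.

Lemma gp2_sym n : symmetric (graph_pow (@gear_adj n) 2).
Proof.
move=> x y; rewrite !gp2 eq_sym; congr (_ && _).
by case: x => [[k|j]|]; case: y => [[k'|j']|] //=; rewrite sh_sym.
Qed.
Lemma gp3_sym n : symmetric (graph_pow (@gear_adj n) 3).
Proof.
move=> x y; rewrite !gp3 eq_sym; congr (_ && _).
by case: x => [[k|j]|]; case: y => [[k'|j']|] //=; rewrite sh_sym.
Qed.
Lemma gp4_sym n : symmetric (graph_pow (@gear_adj n) 4).
Proof. by move=> x y; rewrite !gp4 eq_sym. Qed.

Lemma modS_eq a n : a < n -> a.+1 %% n = if a.+1 == n then 0 else a.+1.
Proof. by case: eqP => [->|h] Ha; [exact: modnn|apply: modn_small; lia]. Qed.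

Lemma ordS_val n (i : 'I_n) : val (ordS i) = if i.+1 == n then 0 else i.+1.
Proof. by rewrite /= modS_eq. Qed.

Lemma ordS_neq n (i : 'I_n) : 1 < n -> ordS i != i.
Proof.
move=> hn; apply/eqP => /(congr1 val); rewrite ordS_val; have := ltn_ord i.
case: eqP; rewrite /=; lia.
Qed.

Lemma ordSS_neq n (i : 'I_n) : 2 < n -> ordS (ordS i) != i.
Proof.
move=> hn; apply/eqP => /(congr1 val); rewrite !ordS_val; have := ltn_ord i.
rewrite /=; case: (i.+1 =P n) => h1; rewrite /= ?modS_eq; try lia; case: eqP; lia.
Qed.

Lemma ordS_pred_neq n (i : 'I_n) : 2 < n -> ordS i != ord_pred i.
Proof.
move=> hn; apply: contra (ordSS_neq i hn) => /eqP E.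
by rewrite E (@ord_predK n i) eqxx.
Qed.

Lemma eq_ordS n (i j : 'I_n) : (i == ordS j) = (ord_pred i == j).
Proof. by rewrite -(inj_eq (@ordS_inj n) (ord_pred i)) ord_predK. Qed.

Lemma sh_eq n (i j : 'I_n) : sh i j = [|| i == j, i == ordS j | j == ordS i].
Proof.
apply/existsP/idP => [[k /andP [/orP [/eqP->|/eqP->] /orP [/eqP E|/eqP E]]]|].
- by rewrite E eqxx.
- by rewrite E eqxx orbT.
- by rewrite -E eqxx !orbT.
- by rewrite (ordS_inj E) eqxx.
case/or3P => /eqP E.
- by exists i; rewrite /vw E !eqxx.
- by exists i; rewrite /vw E !eqxx orbT.
- by exists j; rewrite /vw E !eqxx orbT.
Qed.

Lemma sum_card (T : finType) (P : pred T) : \sum_i (P i : nat) = #|[set i | P i]|.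
Proof.
rewrite -sum1_card [in RHS]big_mkcond /=; apply: eq_bigr => i _; rewrite inE.
by case: (P i).
Qed.

Lemma cnt_neq n (k : 'I_n) : \sum_(k' < n) (k != k' : nat) = n.-1.
Proof.
rewrite sum_card (_ : [set i | k != i] = [set~ k]) ?cardsC1 ?card_ord //.
by apply/setP => i; rewrite !inE eq_sym.
Qed.

Lemma cnt_vw1 n (k : 'I_n) : 1 < n -> \sum_j (vw k j : nat) = 2.
Proof.
move=> hn; rewrite sum_card (_ : [set j | vw k j] = [set k; ord_pred k]).
  rewrite cards2; suff -> : k != ord_pred k by [].
  by rewrite eq_sym -eq_ordS eq_sym ordS_neq.
by apply/setP => j; rewrite !inE /vw eq_ordS (eq_sym k) (eq_sym (ord_pred k)).
Qed.

Lemma cnt_vw2 n (j : 'I_n) : 1 < n -> \sum_k (vw k j : nat) = 2.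
Proof.
move=> hn; rewrite sum_card (_ : [set k | vw k j] = [set j; ordS j]).
  by rewrite cards2 eq_sym ordS_neq.
by apply/setP => k; rewrite !inE /vw.
Qed.

Lemma cnt_sh n (j : 'I_n) : 2 < n -> \sum_i ((j != i) && sh j i : nat) = 2.
Proof.
move=> hn; rewrite sum_card (_ : [set i | (j != i) && sh j i] = [set ordS j; ord_pred j]).
  by rewrite cards2 ordS_pred_neq.
apply/setP => i; rewrite !inE sh_eq.
case: (altP (j =P i)) => [<-|hji] /=.
  have h1 : (j == ordS j) = false by rewrite eq_sym; apply/negbTE/ordS_neq; lia.
  have h2 : (j == ord_pred j) = false by rewrite eq_sym -eq_ordS h1.
  by rewrite h1 h2.
by rewrite eq_ordS orbC (eq_sym (ord_pred j)).
Qed.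

Lemma sum_one n : \sum_(k < n) 1 = n.
Proof. by rewrite sum_nat_const card_ord muln1. Qed.

Lemma eqSI n (a b : 'I_n) : (Some (inl a) == Some (inl b) :> gear_vertex n) = (a == b).
Proof. by []. Qed.
Lemma eqSR n (a b : 'I_n) : (Some (inr a) == Some (inr b) :> gear_vertex n) = (a == b).
Proof. by []. Qed.


Ltac degsimp lem :=
  rewrite /degr; under eq_bigr => ? _ do rewrite lem; rewrite big_gear /=.

Lemma deg2_u n : degr (graph_pow (@gear_adj n) 2) None = n + n.
Proof. by degsimp gp2; rewrite !sum_one. Qed.

Lemma deg2_v n (k : 'I_n) : 1 < n -> degr (graph_pow (@gear_adj n) 2) (Some (inl k)) = n.+2.
Proof.
move=> hn; degsimp gp2; under eq_bigr => k0 _ do rewrite andbT eqSI.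
rewrite cnt_neq cnt_vw1 //; lia.
Qed.

Lemma deg2_w n (j : 'I_n) : 2 < n -> degr (graph_pow (@gear_adj n) 2) (Some (inr j)) = 5.
Proof.
move=> hn; degsimp gp2; rewrite cnt_vw2 ?(ltnW hn) //.
under eq_bigr => k0 _ do rewrite eqSR.
by rewrite cnt_sh.
Qed.

Lemma deg3_u n : degr (graph_pow (@gear_adj n) 3) None = n + n.
Proof. by degsimp gp3; rewrite !sum_one. Qed.

Lemma deg3_v n (k : 'I_n) : 1 < n -> degr (graph_pow (@gear_adj n) 3) (Some (inl k)) = n + n.
Proof.
move=> hn; degsimp gp3; under eq_bigr => k0 _ do rewrite andbT eqSI.
rewrite cnt_neq sum_one; lia.
Qed.

Lemma deg3_w n (j : 'I_n) : 2 < n -> degr (graph_pow (@gear_adj n) 3) (Some (inr j)) = n + 3.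
Proof.
move=> hn; degsimp gp3; rewrite sum_one.
under eq_bigr => k0 _ do rewrite eqSR.
rewrite cnt_sh //; lia.
Qed.

Lemma deg4 n (x : gear_vertex n) : degr (graph_pow (@gear_adj n) 4) x = n + n.
Proof.
rewrite /degr; under eq_bigr => y _ do rewrite gp4.
rewrite sum_card (_ : [set y | x != y] = [set~ x]) ?cardsC1.
  by rewrite card_option card_sum card_ord.
by apply/setP => y; rewrite !inE eq_sym.
Qed.


Lemma sum_cardc (T : finType) (P : pred T) c : \sum_i (P i : nat) * c = #|[set i | P i]| * c.
Proof. by rewrite -big_distrl sum_card. Qed.

Lemma Wt_gear n r (I : {set gear_vertex n}) cu cv cw :
  degr (graph_pow (@gear_adj n) r) None = cu ->
  (forall k, degr (graph_pow (@gear_adj n) r) (Some (inl k)) = cv) ->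
  (forall k, degr (graph_pow (@gear_adj n) r) (Some (inr k)) = cw) ->
  Wt (graph_pow (@gear_adj n) r) I =
  (None \in I) * cu + #|[set k | Some (inl k) \in I]| * cv + #|[set k | Some (inr k) \in I]| * cw.
Proof.
move=> hu hv hw; rewrite /Wt big_gear hu.
under eq_bigr => k _ do rewrite hv.
under [X in _ + X = _]eq_bigr => k _ do rewrite hw.
by rewrite !sum_cardc.
Qed.

Lemma Dt_gear n r cu cv cw :
  degr (graph_pow (@gear_adj n) r) None = cu ->
  (forall k, degr (graph_pow (@gear_adj n) r) (Some (inl k)) = cv) ->
  (forall k, degr (graph_pow (@gear_adj n) r) (Some (inr k)) = cw) ->
  Dt (graph_pow (@gear_adj n) r) = cu + n * cv + n * cw.
Proof.
move=> hu hv hw; rewrite /Dt big_gear hu.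
under eq_bigr => k _ do rewrite hv.
under [X in _ + X = _]eq_bigr => k _ do rewrite hw.
by rewrite !sum_nat_const !card_ord.
Qed.

Lemma cyc_bound n (J X : {set 'I_n}) :
  (forall i, i \in J -> i \notin X) -> (forall i, i \in J -> ordS i \notin X) ->
  (forall i j, i \in J -> j \in J -> j != ordS i) -> #|J| + #|J| + #|X| <= n.
Proof.
move=> h1 h2 h3.
have e1 : #|(@ordS n) @: J| = #|J| by rewrite card_imset //; apply: ordS_inj.
have d1 : J :&: (@ordS n) @: J = set0.
  apply/setP => x; rewrite !inE; apply/negbTE; apply/andP => [[hx /imsetP [i hi E]]].
  by have := h3 _ _ hi hx; rewrite E eqxx.
have d2 : (J :|: (@ordS n) @: J) :&: X = set0.
  apply/setP => x; rewrite !inE; apply/negbTE; apply/andP => [[/orP [hx|/imsetP [i hi E]] hX]].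
    by have := h1 _ hx; rewrite hX.
  by have := h2 _ hi; rewrite -E hX.
have c1 := cardsUI J ((@ordS n) @: J); rewrite d1 cards0 e1 addn0 in c1.
have c2 := cardsUI (J :|: (@ordS n) @: J) X; rewrite d2 cards0 addn0 c1 in c2.
rewrite -c2; have := max_card (mem ((J :|: (@ordS n) @: J) :|: X)).
by rewrite card_ord.
Qed.

Lemma low2 n (I : {set gear_vertex n}) : 2 < n -> indep (graph_pow (@gear_adj n) 2) I ->
  2 * Wt (graph_pow (@gear_adj n) 2) I + 2 * k2 n <= Dt (graph_pow (@gear_adj n) 2).
Proof.
move=> hn HI.
have h1 : 1 < n by lia.
rewrite (Wt_gear I (deg2_u n) (fun k => deg2_v k h1) (fun k => deg2_w k hn)).
rewrite (Dt_gear (deg2_u n) (fun k => deg2_v k h1) (fun k => deg2_w k hn)).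
set K := [set k | Some (inl k) \in I]; set J := [set k | Some (inr k) \in I].
case hu: (None \in I).
  have K0 : K = set0.
    apply/setP => k; rewrite !inE; apply/negbTE/negP => hk.
    by apply: (HI None (Some (inl k))) => //; rewrite gp2.
  have J0 : J = set0.
    apply/setP => k; rewrite !inE; apply/negbTE/negP => hk.
    by apply: (HI None (Some (inr k))) => //; rewrite gp2.
  rewrite K0 J0 cards0 /= !mul0n !addn0 mul1n; exact: ar2a.
have hK : #|K| <= 1.
  apply/card_le1_eqP => a b; rewrite !inE => ha hb.
  case: (altP (a =P b)) => // hab; case: (HI _ _ _ ha hb).
  by rewrite gp2 /= eqSI hab.
have hJ : forall i j, i \in J -> j \in J -> j != ordS i.
  move=> i j; rewrite !inE => hi hj; case: (altP (i =P j)) => [<-|hij].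
    by rewrite eq_sym ordS_neq.
  apply/negP => /eqP E; case: (HI _ _ _ hi hj).
  by rewrite gp2 /= eqSR hij /= sh_eq E eqxx !orbT.
rewrite /= mul0n add0n.
case: (posnP #|K|) => [K0|Kpos].
  have := cyc_bound (X := set0) (fun i _ => negbT (in_set0 i)) (fun i _ => negbT (in_set0 (ordS i))) hJ.
  rewrite cards0 K0 => hb; apply: (ar2b n 0) => //.
have /cards1P [k Kk] : #|K| == 1 by lia.
have hk : Some (inl k) \in I.
  have : k \in K by rewrite Kk set11.
  by rewrite inE.

have hv : forall i, i \in J -> ~~ vw k i.
  move=> i; rewrite inE => hi; apply/negP => hvi; case: (HI _ _ _ hk hi).
  by rewrite gp2 /=.
have := @cyc_bound n J [set k].
rewrite cards1 Kk cards1 => hb; apply: (ar2b n 1) => //; apply: hb => // i hi; rewrite inE.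
- by have := hv i hi; rewrite /vw negb_or eq_sym => /andP [].
- by have := hv i hi; rewrite /vw negb_or => /andP [_]; rewrite eq_sym.
Qed.


Lemma low3 n (I : {set gear_vertex n}) : 2 < n -> indep (graph_pow (@gear_adj n) 3) I ->
  2 * Wt (graph_pow (@gear_adj n) 3) I + 2 * k3 n <= Dt (graph_pow (@gear_adj n) 3).
Proof.
move=> hn HI.
have h1 : 1 < n by lia.
rewrite (Wt_gear I (deg3_u n) (fun k => deg3_v k h1) (fun k => deg3_w k hn)).
rewrite (Dt_gear (deg3_u n) (fun k => deg3_v k h1) (fun k => deg3_w k hn)).
set K := [set k | Some (inl k) \in I]; set J := [set k | Some (inr k) \in I].
case hu: (None \in I).
  have K0 : K = set0.
    apply/setP => k; rewrite !inE; apply/negbTE/negP => hk.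
    by apply: (HI None (Some (inl k))) => //; rewrite gp3.
  have J0 : J = set0.
    apply/setP => k; rewrite !inE; apply/negbTE/negP => hk.
    by apply: (HI None (Some (inr k))) => //; rewrite gp3.
  rewrite K0 J0 cards0 /= !mul0n !addn0 mul1n; exact: ar3a.
have hK : #|K| <= 1.
  apply/card_le1_eqP => a b; rewrite !inE => ha hb.
  case: (altP (a =P b)) => // hab; case: (HI _ _ _ ha hb).
  by rewrite gp3 /= eqSI hab.
rewrite /= mul0n add0n.
case: (posnP #|K|) => [K0|Kpos].
  have hJ : forall i j, i \in J -> j \in J -> j != ordS i.
    move=> i j; rewrite !inE => hi hj; case: (altP (i =P j)) => [<-|hij].
      by rewrite eq_sym ordS_neq.
    apply/negP => /eqP E; case: (HI _ _ _ hi hj).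
    by rewrite gp3 /= eqSR hij /= sh_eq E eqxx !orbT.
  have := cyc_bound (X := set0) (fun i _ => negbT (in_set0 i)) (fun i _ => negbT (in_set0 (ordS i))) hJ.
  rewrite cards0 K0 addn0 => hb; rewrite mul0n add0n; exact: ar3b.
have /cards1P [k Kk] : #|K| == 1 by lia.
have hk : Some (inl k) \in I.
  have : k \in K by rewrite Kk set11.
  by rewrite inE.
have J0 : J = set0.
  apply/setP => j; rewrite !inE; apply/negbTE/negP => hj.
  by apply: (HI _ _ _ hk hj); rewrite gp3.
rewrite J0 Kk cards0 cards1 mul0n addn0 mul1n; exact: ar3a.
Qed.

Lemma low4 n (I : {set gear_vertex n}) : 2 < n -> indep (graph_pow (@gear_adj n) 4) I ->
  2 * Wt (graph_pow (@gear_adj n) 4) I + 2 * (n * (2 * n - 1)) <= Dt (graph_pow (@gear_adj n) 4).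
Proof.
move=> hn HI.
rewrite /Wt /Dt; under eq_bigr => x _ do rewrite deg4.
under [X in _ <= X]eq_bigr => x _ do rewrite deg4.
rewrite sum_cardc sum_nat_const card_option card_sum card_ord.
have hI : #|[set x | x \in I]| <= 1.
  apply/card_le1_eqP => a b; rewrite !inE => ha hb.
  case: (altP (a =P b)) => // hab; case: (HI _ _ _ ha hb).
  by rewrite gp4.
case: #|_| hI => [|[|//]] _; nia.
Qed.

Lemma cnt_lt n (P : nat -> bool) : 0 < n ->
  #|[set j : 'I_n | P j && (j.+1 < n)]| = \sum_(j < n.-1) (P j : nat).
Proof.
case: n => // m _; rewrite -sum_card big_ord_recr /= ltnn andbF addn0.
by apply: eq_bigr => j _; rewrite /= ltnS ltn_ord andbT.
Qed.

Lemma parity_ordS n (i j : 'I_n) : j.+1 < n -> i = ordS j :> 'I_n -> odd i = ~~ odd j.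
Proof. by move=> hj ->; rewrite ordS_val; case: eqP => [E|_]; [lia|rewrite oddS]. Qed.

Lemma ww_ind n (i j : 'I_n) (P : nat -> bool) :
  (forall a b, P a -> P b -> odd a = odd b) ->
  P i -> i.+1 < n -> P j -> j.+1 < n -> (i != j) && sh i j = false.
Proof.
move=> HP hi hi' hj hj'; apply/negbTE; rewrite sh_eq negb_and; case: (altP (i =P j)) => //= hij.
apply/negP => /orP [/eqP E|/eqP E].
- by have := parity_ordS hj' E; rewrite (HP _ _ hi hj); case: (odd j).
- by have := parity_ordS hi' E; rewrite (HP _ _ hj hi); case: (odd i).
Qed.

Definition I3 n : {set gear_vertex n} :=
  [set x : gear_vertex n | if x is Some (inr j) then ~~ odd j && (j.+1 < n) else false].

Lemma wit3 n : 2 < n -> indep (graph_pow (@gear_adj n) 3) (I3 n) /\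
  2 * k3 n + 2 * Wt (graph_pow (@gear_adj n) 3) (I3 n) = Dt (graph_pow (@gear_adj n) 3).
Proof.
move=> hn; have h1 : 1 < n by lia.
split.
  move=> [[k|i]|] [[k'|j]|] //; rewrite gp3 !inE //= eqSR => /andP [ne s] /andP [hi hi'] /andP [hj hj'].
  have HP : forall a b, ~~ odd a -> ~~ odd b -> odd a = odd b by move=> a b /negbTE -> /negbTE ->.
  by have := @ww_ind n i j (fun a => ~~ odd a) HP hi hi' hj hj'; rewrite ne s.
rewrite (Wt_gear _ (deg3_u n) (fun k => deg3_v k h1) (fun k => deg3_w k hn)).
rewrite (Dt_gear (deg3_u n) (fun k => deg3_v k h1) (fun k => deg3_w k hn)).
have -> : [set k | Some (inl k) \in I3 n] = set0 by apply/setP => k; rewrite !inE.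
have -> : [set k | Some (inr k) \in I3 n] = [set j : 'I_n | ~~ odd j && (j.+1 < n)].
  by apply/setP => k; rewrite !inE.
rewrite (cnt_lt (fun a => ~~ odd a)) ?(ltnW (ltnW hn)) // (cnt_par n.-1).2 cards0 inE /= mul0n !add0n.
have -> : uphalf n.-1 = n./2 by rewrite -{2}(prednK (ltnW (ltnW hn))).
exact: ar3w.
Qed.

Definition I2 n : {set gear_vertex n} :=
  [set x : gear_vertex n | match x with
           | Some (inl k) => val k == 0
           | Some (inr j) => odd j && (j.+1 < n)
           | None => false end].

Lemma wit2 n : 2 < n -> indep (graph_pow (@gear_adj n) 2) (I2 n) /\
  2 * k2 n + 2 * Wt (graph_pow (@gear_adj n) 2) (I2 n) = Dt (graph_pow (@gear_adj n) 2).
Proof.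
move=> hn; have h1 : 1 < n by lia.
split.
  move=> [[k|i]|] [[k'|j]|] //; rewrite gp2 !inE //=.
  - rewrite eqSI => /andP [ne _] /eqP hk /eqP hk'; move: ne.
    have E : k = k' by apply: val_inj; rewrite /= hk hk'.
    by rewrite E eqxx.
  - move=> H /eqP hk /andP [hj hj']; case/orP: H => /eqP E.
      by move: hj; rewrite -E hk.
    by move: hk; rewrite E ordS_val; case: eqP; lia.
  - move=> H /andP [hj hj'] /eqP hk; case/orP: H => /eqP E.
      by move: hj; rewrite -E hk.
    by move: hk; rewrite E ordS_val; case: eqP; lia.
  - rewrite eqSR => /andP [ne s] /andP [hi hi'] /andP [hj hj'].
    have HP : forall a b, odd a -> odd b -> odd a = odd b by move=> a b -> ->.
    by have := @ww_ind n i j (fun a => odd a) HP hi hi' hj hj'; rewrite ne s.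
rewrite (Wt_gear _ (deg2_u n) (fun k => deg2_v k h1) (fun k => deg2_w k hn)).
rewrite (Dt_gear (deg2_u n) (fun k => deg2_v k h1) (fun k => deg2_w k hn)).
have -> : [set k | Some (inl k) \in I2 n] = [set Ordinal (ltnW (ltnW hn))].
  by apply/setP => k; rewrite !inE.
have -> : [set k | Some (inr k) \in I2 n] = [set j : 'I_n | odd j && (j.+1 < n)].
  by apply/setP => k; rewrite !inE.
rewrite (cnt_lt (fun a => odd a)) ?(ltnW (ltnW hn)) // (cnt_par n.-1).1 cards1 inE /= mul0n !add0n.
exact: ar2w.
Qed.

Lemma wit4 n : 2 < n -> indep (graph_pow (@gear_adj n) 4) [set None] /\
  2 * (n * (2 * n - 1)) + 2 * Wt (graph_pow (@gear_adj n) 4) [set None] = Dt (graph_pow (@gear_adj n) 4).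
Proof.
move=> hn; split.
  by move=> x y; rewrite gp4 !inE => H /eqP hx /eqP hy; move: H; rewrite hx hy eqxx.
rewrite /Wt /Dt; under eq_bigr => x _ do rewrite deg4.
under [X in _ = X]eq_bigr => x _ do rewrite deg4.
rewrite sum_cardc sum_nat_const card_option card_sum card_ord.
rewrite (_ : [set x | x \in [set None]] = [set None]) ?cards1; last by apply/setP => x; rewrite inE.
exact: ar4w.
Qed.

Theorem mainTheorem10 (n : nat) (hn : 3 <= n) :
  [/\ sparing_number_is (graph_pow (@gear_adj n) 2)
        (if odd n then ((n + 1) ^ 2)./2 else ((n + 1) ^ 2 + 5)./2),
      sparing_number_is (graph_pow (@gear_adj n) 3)
        (if odd n then (2 * n ^ 2 + 3 * n + 3)./2 else n * (n + 1)) &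
      sparing_number_is (graph_pow (@gear_adj n) 4) (n * (2 * n - 1))].
Proof.
have hn' : 2 < n by [].
split.
- apply: (sparing_char (@gp_irr n 2) (@gp2_sym n)).
  + have [h1 h2] := wit2 hn'; exists (I2 n); split => //; exact: h2.
  + by move=> I HI; exact: (low2 hn' HI).
- apply: (sparing_char (@gp_irr n 3) (@gp3_sym n)).
  + have [h1 h2] := wit3 hn'; exists (I3 n); split => //; exact: h2.
  + by move=> I HI; exact: (low3 hn' HI).
- apply: (sparing_char (@gp_irr n 4) (@gp4_sym n)).
  + have [h1 h2] := wit4 hn'; exists [set None]; split => //; exact: h2.
  + by move=> I HI; exact: (low4 hn' HI).
Qed.
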